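(* Let $m\ge1$, $n\ge1$ and let $\Sigma_0,\Sigma_1,\dots,\Sigma_n\in\mathbb R^{m\times m}$ be such that the block-Toeplitz matrix $\mathbf T_n$, whose $(i,j)$ block ($i,j=0,\dots,n$) is $\Sigma_{i-j}$ if $i\ge j$ and $\Sigma_{j-i}^\top$ if $i<j$, satisfies $\mathbf T_n=\mathbf T_n^\top>0$. Then there exists $\bar N$ such that for every $N\ge\bar N$ the matrix $\mathbf T_n$ can be extended to an $N\times N$ block ($mN\times mN$) block-circulant, symmetric, positive definite matrix $\boldsymbol\Sigma_N$, i.e. one whose upper-left $(n+1)\times(n+1)$ block corner equals $\mathbf T_n$.
   Context: A matrix made of $N\times N$ blocks of size $m\times m$ is block-circulant if its $(i,j)$ block depends only on $(i-j)\bmod N$. *)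

(* Defs.v *)
From HB Require Import structures.
From mathcomp Require Import all_boot all_order all_algebra.
From mathcomp Require Export reals.
Set Implicit Arguments. Unset Strict Implicit. Unset Printing Implicit Defensive.
Import Order.TTheory GRing.Theory Num.Theory.
Local Open Scope ring_scope.

Definition posdef (R : realType) (s : nat) (A : 'M[R]_s) : Prop :=
  forall x : 'rV[R]_s, x != 0 -> 0 < (x *m A *m x^T) 0 0.

Definition toep_block (R : realType) (m n : nat) (Sigma : 'I_n.+1 -> 'M[R]_m)
    (i j : nat) : 'M[R]_m :=
  if (j <= i)%N then Sigma (inord (i - j)) else (Sigma (inord (j - i)))^T.

Definition toeplitzT (R : realType) (m n : nat) (Sigma : 'I_n.+1 -> 'M[R]_m) :=
  \mxblock_(i < n.+1, j < n.+1) toep_block Sigma i j :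
    'M[R]_(\sum_(i < n.+1) m, \sum_(j < n.+1) m).

Definition block_circulant (R : realType) (m N : nat)
    (S : 'M[R]_(\sum_(i < N) m, \sum_(j < N) m)) : Prop :=
  forall i j i' j' : 'I_N,
    ((i + N - j) %% N = (i' + N - j') %% N)%N ->
    submxblock S i j = submxblock S i' j'.

(* Main.v *)
Require Import Defs.
From HB Require Import structures.
From mathcomp Require Import all_boot all_order all_algebra.
From mathcomp Require Import reals.
From mathcomp Require Import ring lra.
Set Implicit Arguments. Unset Strict Implicit. Unset Printing Implicit Defensive.
Import Order.TTheory GRing.Theory Num.Theory.
Local Open Scope ring_scope.


Definition bil {R : realType} p q (u : 'rV[R]_p) (A : 'M[R]_(p,q)) (v : 'rV[R]_q) : R :=
  (u *m A *m v^T) 0 0.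

Lemma bilDl {R : realType} p q (u1 u2 : 'rV[R]_p) A (v : 'rV[R]_q) :
  bil (u1 + u2) A v = bil u1 A v + bil u2 A v.
Proof. by rewrite /bil !mulmxDl mxE. Qed.
Lemma bilDr {R : realType} p q (u : 'rV[R]_p) A (v1 v2 : 'rV[R]_q) :
  bil u A (v1 + v2) = bil u A v1 + bil u A v2.
Proof. by rewrite /bil linearD /= mulmxDr mxE. Qed.
Lemma bilDm {R : realType} p q (u : 'rV[R]_p) A B (v : 'rV[R]_q) :
  bil u (A + B) v = bil u A v + bil u B v.
Proof. by rewrite /bil mulmxDr mulmxDl mxE. Qed.
Lemma bilZl {R : realType} p q c (u : 'rV[R]_p) A (v : 'rV[R]_q) :
  bil (c *: u) A v = c * bil u A v.
Proof. by rewrite /bil -!scalemxAl mxE. Qed.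
Lemma bilZr {R : realType} p q c (u : 'rV[R]_p) A (v : 'rV[R]_q) :
  bil u A (c *: v) = c * bil u A v.
Proof. by rewrite /bil linearZ /= -scalemxAr mxE. Qed.
Lemma bilZm {R : realType} p q c (u : 'rV[R]_p) A (v : 'rV[R]_q) :
  bil u (c *: A) v = c * bil u A v.
Proof. by rewrite /bil -scalemxAr -scalemxAl mxE. Qed.
Lemma bilNl {R : realType} p q (u : 'rV[R]_p) A (v : 'rV[R]_q) :
  bil (- u) A v = - bil u A v.
Proof. by rewrite -scaleN1r bilZl mulN1r. Qed.
Lemma bilNr {R : realType} p q (u : 'rV[R]_p) A (v : 'rV[R]_q) :
  bil u A (- v) = - bil u A v.
Proof. by rewrite -scaleN1r bilZr mulN1r. Qed.
Lemma bil0l {R : realType} p q A (v : 'rV[R]_q) : bil (0 : 'rV[R]_p) A v = 0.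
Proof. by rewrite /bil !mul0mx mxE. Qed.
Lemma bil0r {R : realType} p q (u : 'rV[R]_p) A : bil u A (0 : 'rV[R]_q) = 0.
Proof. by rewrite /bil trmx0 mulmx0 mxE. Qed.
Lemma bil_mull {R : realType} p p' q (u : 'rV[R]_p) (P : 'M_(p,p')) A (v : 'rV[R]_q) :
  bil (u *m P) A v = bil u (P *m A) v.
Proof. by rewrite /bil !mulmxA. Qed.
Lemma bil_mulr {R : realType} p q q' (u : 'rV[R]_p) A (v : 'rV[R]_q') (Q : 'M_(q',q)) :
  bil u A (v *m Q) = bil u (A *m Q^T) v.
Proof. by rewrite /bil trmx_mul !mulmxA. Qed.
Lemma bilC {R : realType} p q (u : 'rV[R]_p) A (v : 'rV[R]_q) :
  bil u A v = bil v A^T u.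
Proof.
rewrite /bil; transitivity ((u *m A *m v^T)^T 0 0); first by rewrite [RHS]mxE.
by rewrite !trmx_mul trmxK mulmxA.
Qed.


Definition Qf {R : realType} {m : nat} (F : nat -> nat -> 'M[R]_m) (k : nat)
  (f : nat -> 'rV[R]_m) : R :=
  \sum_(0 <= i < k) \sum_(0 <= j < k) bil (f i) (F i j) (f j).

Definition pdF {R : realType} {m : nat} (F : nat -> nat -> 'M[R]_m) (k : nat) :=
  forall f : nat -> 'rV[R]_m, (exists2 i, (i < k)%N & f i != 0) -> 0 < Qf F k f.

Definition xb {R : realType} {m k : nat} (x : 'rV[R]_(\sum_(i < k) m)) (i : nat)
  : 'rV[R]_m :=
  if @insub nat (fun i => (i < k)%N) 'I_k i is Some o then submxrow x o else 0.

Lemma xbE {R : realType} {m k : nat} (x : 'rV[R]_(\sum_(i < k) m)) (o : 'I_k) :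
  xb x o = submxrow x o.
Proof. by rewrite /xb valK. Qed.

Lemma bil_mxrow_block {R : realType} {m k : nat} (f g : 'I_k -> 'rV[R]_m)
   (F : 'I_k -> 'I_k -> 'M[R]_m) :
  bil (\mxrow_i f i) (\mxblock_(i, j) F i j) (\mxrow_j g j) =
  \sum_i \sum_j bil (f i) (F i j) (g j).
Proof.
rewrite /bil mul_mxrow_mxblock tr_mxrow mul_mxrow_mxcol summxE exchange_big.
by apply: eq_bigr => j _; rewrite mulmx_suml summxE.
Qed.

Lemma bil_block_xb {R : realType} {m k : nat} (x y : 'rV[R]_(\sum_(i < k) m))
   (F : nat -> nat -> 'M[R]_m) :
  bil x (\mxblock_(i < k, j < k) F i j) y =
  \sum_(0 <= i < k) \sum_(0 <= j < k) bil (xb x i) (F i j) (xb y j).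
Proof.
rewrite -{1}(submxrowK x) -{1}(submxrowK y) bil_mxrow_block big_mkord.
apply: eq_bigr => i _; rewrite big_mkord; apply: eq_bigr => j _.
by rewrite !xbE.
Qed.

Lemma Qf_mxrow {R : realType} {m k : nat} (F : nat -> nat -> 'M[R]_m)
  (f : nat -> 'rV[R]_m) :
  Qf F k f = bil (\mxrow_(i < k) f i) (\mxblock_(i < k, j < k) F i j) (\mxrow_(j < k) f j).
Proof.
rewrite bil_mxrow_block /Qf big_mkord; apply: eq_bigr => i _.
by rewrite big_mkord.
Qed.

Lemma mxrow_neq0 {R : realType} {m k : nat} (f : nat -> 'rV[R]_m) i :
  (i < k)%N -> f i != 0 -> (\mxrow_(j < k) f j) != 0.
Proof.
move=> ik fi; apply/negP => /eqP H.
move: fi; have := mxrowK (fun j : 'I_k => f j) (Ordinal ik).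
by rewrite H submxrow0 /= => <-; rewrite eqxx.
Qed.

Lemma posdef_pdF {R : realType} {m k : nat} (F : nat -> nat -> 'M[R]_m) :
  posdef (\mxblock_(i < k, j < k) F i j) -> pdF F k.
Proof.
move=> H f [i ik fi]; rewrite Qf_mxrow; apply: H.
exact: mxrow_neq0 ik fi.
Qed.

Lemma pdF_posdef {R : realType} {m k : nat} (F : nat -> nat -> 'M[R]_m) :
  pdF F k -> posdef (\mxblock_(i < k, j < k) F i j).
Proof.
move=> H x x0; have := bil_block_xb x x F; rewrite /bil => ->; apply: H.
case: (pickP (fun i : 'I_k => submxrow x i != 0)) => [i Hi | H0].
  by exists i => //; rewrite xbE.
move: x0; rewrite -(submxrowK x).
have -> : (\mxrow_j submxrow x j) = \mxrow_j (0 : 'rV[R]_m).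
  by apply: eq_mxrow => j; have := H0 j; move/negbFE/eqP.
by rewrite mxrow0 eqxx.
Qed.


Lemma Qf_first {R : realType} {m : nat} (F : nat -> nat -> 'M[R]_m) k f :
  Qf F k.+1 f = bil (f 0%N) (F 0%N 0%N) (f 0%N)
   + \sum_(0 <= j < k) bil (f 0%N) (F 0%N j.+1) (f j.+1)
   + \sum_(0 <= i < k) bil (f i.+1) (F i.+1 0%N) (f 0%N)
   + Qf (fun i j => F i.+1 j.+1) k (fun i => f i.+1).
Proof.
rewrite /Qf big_nat_recl //. idtac.
under eq_bigr do rewrite big_nat_recl //.
rewrite big_split /= big_nat_recl //; ring.
Qed.

Lemma Qf_last {R : realType} {m : nat} (F : nat -> nat -> 'M[R]_m) k f :
  Qf F k.+1 f = Qf F k f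
   + \sum_(0 <= i < k) bil (f i) (F i k) (f k)
   + \sum_(0 <= j < k) bil (f k) (F k j) (f j)
   + bil (f k) (F k k) (f k).
Proof.
rewrite /Qf big_nat_recr //= big_nat_recr //=.
under eq_bigr do rewrite big_nat_recr //=.
rewrite big_split /=; ring.
Qed.

Lemma sum_bil_row {R : realType} {m : nat} (u : 'rV[R]_m) (A : nat -> 'M[R]_m)
  (g : nat -> 'rV[R]_m) k :
  \sum_(0 <= j < k) bil u (A j) (g j) =
  bil u (\mxrow_(j < k) A j) (\mxrow_(j < k) g j).
Proof.
rewrite /bil tr_mxrow mul_mxrow mul_mxrow_mxcol summxE big_mkord.
by apply: eq_bigr => j _; idtac.
Qed.

Lemma sum_bil_col {R : realType} {m : nat} (g : nat -> 'rV[R]_m) (B : nat -> 'M[R]_m)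
  (z : 'rV[R]_m) k :
  \sum_(0 <= i < k) bil (g i) (B i) z =
  bil (\mxrow_(i < k) g i) (\mxcol_(i < k) B i) z.
Proof.
by rewrite /bil mul_mxrow_mxcol mulmx_suml summxE big_mkord.
Qed.

Definition symF {R : realType} {m : nat} (F : nat -> nat -> 'M[R]_m) :=
  forall i j, F j i = (F i j)^T.

Lemma Qf_three {R : realType} {m : nat} (F : nat -> nat -> 'M[R]_m) k f :
  symF F ->
  Qf F k.+2 f = bil (f 0%N) (F 0%N 0%N) (f 0%N)
    + 2 * bil (f 0%N) (\mxrow_(j < k) F 0%N j.+1) (\mxrow_(j < k) f j.+1)
    + bil (\mxrow_(j < k) f j.+1) (\mxblock_(i < k, j < k) F i.+1 j.+1)
          (\mxrow_(j < k) f j.+1)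
    + 2 * bil (\mxrow_(j < k) f j.+1) (\mxcol_(i < k) F i.+1 k.+1) (f k.+1)
    + 2 * bil (f 0%N) (F 0%N k.+1) (f k.+1)
    + bil (f k.+1) (F k.+1 k.+1) (f k.+1).
Proof.
move=> sF; rewrite Qf_first Qf_last big_nat_recr //= big_nat_recr //=.
rewrite Qf_mxrow /=.
have E1 : \sum_(0 <= i < k) bil (f i.+1) (F i.+1 0%N) (f 0%N) =
          \sum_(0 <= j < k) bil (f 0%N) (F 0%N j.+1) (f j.+1).
  by apply: eq_bigr => i _; rewrite bilC -sF.
have E2 : \sum_(0 <= j < k) bil (f k.+1) (F k.+1 j.+1) (f j.+1) =
          \sum_(0 <= i < k) bil (f i.+1) (F i.+1 k.+1) (f k.+1).
  by apply: eq_bigr => i _; rewrite bilC -sF.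
have E3 : bil (f k.+1) (F k.+1 0%N) (f 0%N) = bil (f 0%N) (F 0%N k.+1) (f k.+1).
  by rewrite bilC -sF.
rewrite E1 E2 E3 sum_bil_row sum_bil_col; ring.
Qed.


Lemma schur {R : realType} {m p : nat} (A0 D0 : 'M[R]_m) (a : 'M[R]_(m,p))
  (b : 'M[R]_(p,m)) (M : 'M[R]_p) :
  M^T = M -> M \in unitmx ->
  (forall u v, (u != 0) || (v != 0) -> 0 < bil u A0 u + 2 * bil u a v + bil v M v) ->
  (forall v z, (v != 0) || (z != 0) -> 0 < bil v M v + 2 * bil v b z + bil z D0 z) ->
  forall u w z, [|| u != 0, w != 0 | z != 0] ->
  0 < bil u A0 u + 2 * bil u a w + bil w M w + 2 * bil w b z
      + 2 * bil u (a *m invmx M *m b) z + bil z D0 z.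
Proof.
move=> MT Mu PD1 PD2 u w z nz.
set Mi := invmx M.
have MiT : Mi^T = Mi by rewrite /Mi trmx_inv MT.
have MMi : M *m Mi = 1%:M by rewrite /Mi mulmxV.
have MiM : Mi *m M = 1%:M by rewrite /Mi mulVmx.
have Mpsd : forall v, 0 <= bil v M v.
  move=> v; have [->|v0] := eqVneq v 0; first by rewrite bil0l.
  have := PD1 0 v; rewrite v0 orbT !bil0l ?bil0r mulr0 !add0r => H.
  by apply: ltW; apply: H.
pose s1 u := bil u A0 u - bil u (a *m Mi *m a^T) u.
pose s2 z := bil z D0 z - bil z (b^T *m Mi *m b) z.
have E1 : forall u, bil u A0 u + 2 * bil u a (- (u *m (a *m Mi)))
      + bil (- (u *m (a *m Mi))) M (- (u *m (a *m Mi))) = s1 u.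
  move=> u'; rewrite ?bilNl ?bilNr ?opprK bil_mull !bil_mulr.
  rewrite trmx_mul MiT !mulmxA -(mulmxA a Mi M) MiM mulmx1 /s1; ring.
have E2 : forall z, bil (- (z *m (b^T *m Mi))) M (- (z *m (b^T *m Mi)))
      + 2 * bil (- (z *m (b^T *m Mi))) b z + bil z D0 z = s2 z.
  move=> z'; rewrite ?bilNl ?bilNr ?opprK !bil_mull bil_mulr.
  rewrite trmx_mul MiT trmxK !mulmxA -(mulmxA _ Mi M) MiM mulmx1 /s2; ring.
have S1 : forall u, 0 <= s1 u /\ (u != 0 -> 0 < s1 u).
  move=> u'; rewrite -E1; split; last first.
    by move=> u0; apply: PD1; rewrite u0.
  have [->|u0] := eqVneq u' 0; last by apply: ltW; apply: PD1; rewrite u0.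
  by rewrite !mul0mx oppr0 !bil0l ?bil0r mulr0 !addr0.
have S2 : forall z, 0 <= s2 z /\ (z != 0 -> 0 < s2 z).
  move=> z'; rewrite -E2; split; last first.
    by move=> z0; apply: PD2; rewrite z0 orbT.
  have [->|z0] := eqVneq z' 0; last by apply: ltW; apply: PD2; rewrite z0 orbT.
  by rewrite !mul0mx oppr0 !bil0l ?bil0r mulr0 !addr0.
pose t := w + u *m (a *m Mi) + z *m (b^T *m Mi).
have ID : bil u A0 u + 2 * bil u a w + bil w M w + 2 * bil w b z
      + 2 * bil u (a *m invmx M *m b) z + bil z D0 z = bil t M t + s1 u + s2 z.
  rewrite /t !bilDl !bilDr.
  have e1 : bil w M (u *m (a *m Mi)) = bil u a w.
    by rewrite bil_mulr trmx_mul MiT mulmxA MMi mul1mx bilC trmxK.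
  have e2 : bil (u *m (a *m Mi)) M w = bil u a w.
    by rewrite bil_mull -mulmxA MiM mulmx1.
  have e3 : bil w M (z *m (b^T *m Mi)) = bil w b z.
    by rewrite bil_mulr trmx_mul MiT trmxK mulmxA MMi mul1mx.
  have e4 : bil (z *m (b^T *m Mi)) M w = bil w b z.
    by rewrite bil_mull -mulmxA MiM mulmx1 bilC trmxK.
  have e5 : bil (u *m (a *m Mi)) M (u *m (a *m Mi)) = bil u (a *m Mi *m a^T) u.
    by rewrite bil_mull bil_mulr trmx_mul MiT -!mulmxA (mulmxA M) MMi mul1mx.
  have e6 : bil (z *m (b^T *m Mi)) M (z *m (b^T *m Mi)) = bil z (b^T *m Mi *m b) z.
    by rewrite bil_mull bil_mulr trmx_mul MiT trmxK -!mulmxA (mulmxA M) MMi mul1mx.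
  have e7 : bil (u *m (a *m Mi)) M (z *m (b^T *m Mi)) = bil u (a *m Mi *m b) z.
    by rewrite bil_mull bil_mulr trmx_mul MiT trmxK -!mulmxA (mulmxA M) MMi mul1mx.
  have e8 : bil (z *m (b^T *m Mi)) M (u *m (a *m Mi)) = bil u (a *m Mi *m b) z.
    rewrite bil_mull bil_mulr trmx_mul MiT -!mulmxA (mulmxA M) MMi mul1mx bilC.
    by rewrite !trmx_mul trmxK MiT trmxK mulmxA.
  rewrite e1 e2 e3 e4 e5 e6 e7 e8 /s1 /s2 /Mi; ring.
rewrite ID.
have [t0|tpos] := eqVneq t 0.
- have [u0|uz] := eqVneq u 0.
  + have [z0|zz] := eqVneq z 0.
      move: t0; rewrite /t u0 z0 !mul0mx !addr0 => w0.
      by move: nz; rewrite u0 z0 w0 !eqxx.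
    have := S1 u; have := S2 z; have := Mpsd t => Ht [Sa /(_ zz) Sb] [Sc Sd].
    lra.
  + have := S1 u; have := S2 z; have := Mpsd t => Ht [Sa Sb] [Sc /(_ uz) Sd].
    lra.
- have Ht : 0 < bil t M t.
    by have := PD1 0 t; rewrite tpos orbT !bil0l ?bil0r mulr0 !add0r; apply.
  have := S1 u; have := S2 z => [[Sa Sb] [Sc Sd]]; lra.
Qed.


Definition Gt {R : realType} {m : nat} (Ga : nat -> 'M[R]_m) (i j : nat) : 'M[R]_m :=
  if (j <= i)%N then Ga (i - j)%N else (Ga (j - i)%N)^T.

Lemma Gt_sym {R : realType} {m : nat} (Ga : nat -> 'M[R]_m) :
  (Ga 0%N)^T = Ga 0%N -> symF (Gt Ga).
Proof.
move=> H i j; rewrite /Gt; case: (ltngtP i j) => [ij|ij|->].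
- by rewrite trmxK.
- by [].
- by rewrite subnn H.
Qed.

Lemma Gt_shift {R : realType} {m : nat} (Ga : nat -> 'M[R]_m) i j :
  Gt Ga i.+1 j.+1 = Gt Ga i j.
Proof. by rewrite /Gt ltnS !subSS. Qed.

Lemma Gt_agree {R : realType} {m : nat} (Ga Gb : nat -> 'M[R]_m) k i j :
  (forall d, (d <= k)%N -> Gb d = Ga d) -> (i - j <= k)%N -> (j - i <= k)%N ->
  Gt Gb i j = Gt Ga i j.
Proof. by move=> H h1 h2; rewrite /Gt; case: ifP => _; rewrite H. Qed.

Lemma mxrow_xb {R : realType} {m k : nat} (v : 'rV[R]_(\sum_(i < k) m)) :
  \mxrow_(j < k) xb v j = v.
Proof.
rewrite -{2}(submxrowK v); apply: eq_mxrow => j; exact: xbE.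
Qed.

Lemma xb_neq0 {R : realType} {m k : nat} (v : 'rV[R]_(\sum_(i < k) m)) :
  v != 0 -> exists2 i, (i < k)%N & xb v i != 0.
Proof.
move=> v0; case: (pickP (fun i : 'I_k => submxrow v i != 0)) => [i Hi | H0].
  by exists i => //; rewrite xbE.
move: v0; rewrite -(submxrowK v).
have -> : (\mxrow_j submxrow v j) = \mxrow_j (0 : 'rV[R]_m).
  by apply: eq_mxrow => j; have := H0 j; move/negbFE/eqP.
by rewrite mxrow0 eqxx.
Qed.

Lemma Qf_ext {R : realType} {m : nat} (F : nat -> nat -> 'M[R]_m) k f g :
  (forall i, (i < k)%N -> f i = g i) -> Qf F k f = Qf F k g.
Proof.
move=> H; rewrite /Qf; apply: eq_big_nat => i /andP[_ ik].
by apply: eq_big_nat => j /andP[_ jk]; rewrite !H.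
Qed.

Lemma posdef_unit {R : realType} {p : nat} (M : 'M[R]_p) :
  (forall v, v != 0 -> 0 < bil v M v) -> M \in unitmx.
Proof.
move=> H; rewrite unitmxE unitfE; apply/negP => /det0P [v v0 vM].
by have := H v v0; rewrite /bil vM mul0mx mxE ltxx.
Qed.

Lemma ext_step {R : realType} {m : nat} (Ga : nat -> 'M[R]_m) k :
  (Ga 0%N)^T = Ga 0%N -> pdF (Gt Ga) k.+1 ->
  exists Gb, (forall d, (d <= k)%N -> Gb d = Ga d) /\ pdF (Gt Gb) k.+2.
Proof.
move=> sym0 pd.
have sF := Gt_sym sym0.
set F := Gt Ga in sF pd *.
pose M := \mxblock_(i < k, j < k) F i.+1 j.+1.
pose a := \mxrow_(j < k) F 0%N j.+1.
pose b := \mxcol_(i < k) F i.+1 k.+1.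
have PD1 : forall u v, (u != 0) || (v != 0) ->
    0 < bil u (Ga 0%N) u + 2 * bil u a v + bil v M v.
  move=> u v nz.
  pose f := fun i => if i is i'.+1 then xb v i' else u.
  have := pd f; rewrite Qf_first /f /=.
  rewrite sum_bil_row mxrow_xb.
  have -> : \sum_(0 <= i < k) bil (xb v i) (F i.+1 0%N) u =
            bil u a v.
    rewrite /a -[in RHS](mxrow_xb v) -(sum_bil_row u (fun j => F 0%N j.+1) (xb v)); apply: eq_bigr => i _.
    by rewrite bilC -sF.
  rewrite Qf_mxrow mxrow_xb.
  have -> : F 0%N 0%N = Ga 0%N by rewrite /F /Gt leqnn subnn.
  have E : forall x y z : R, x + y + y + z = x + 2 * y + z by move=> x y z; ring.
  rewrite -/M -/a E; apply.
  case/orP: nz => [u0|v0]; first by exists 0%N.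
  by have [i ik vi] := xb_neq0 v0; exists i.+1.
have PD2 : forall v z, (v != 0) || (z != 0) ->
    0 < bil v M v + 2 * bil v b z + bil z (Ga 0%N) z.
  move=> v z nz.
  pose f := fun i => if (i < k)%N then xb v i else z.
  have := pd f; rewrite Qf_last.
  rewrite (@Qf_ext _ _ _ _ f (xb v)); last by move=> i ik; rewrite /f ik.
  rewrite /f ltnn.
  have -> : \sum_(0 <= i < k) bil (if (i < k)%N then xb v i else z) (F i k) z
      = \sum_(0 <= i < k) bil (xb v i) (F i k) z.
    by apply: eq_big_nat => i /andP[_ ik]; rewrite ik.
  have -> : \sum_(0 <= i < k) bil z (F k i) (if (i < k)%N then xb v i else z)
      = \sum_(0 <= i < k) bil (xb v i) (F i k) z.
    by apply: eq_big_nat => i /andP[_ ik]; rewrite ik bilC -sF.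
  rewrite sum_bil_col mxrow_xb Qf_mxrow mxrow_xb.
  have -> : \mxblock_(i < k, j < k) F i j = M.
    by apply: eq_mxblock => i j; rewrite /M /F Gt_shift.
  have -> : \mxcol_(i < k) F i k = b.
    by apply: eq_mxcol => i; rewrite /b /F Gt_shift.
  rewrite /F /Gt leqnn subnn.
  have E : forall x y w : R, x + y + y + w = x + 2 * y + w by move=> x y w; ring.
  rewrite E; apply.
  case/orP: nz => [v0|z0]; last by exists k => //; rewrite /f ltnn.
  have [i ik vi] := xb_neq0 v0; exists i; first exact: ltnW.
  by rewrite /f ik.
have MT : M^T = M.
  by rewrite /M tr_mxblock; apply: eq_mxblock => i j; rewrite -sF.
have Mu : M \in unitmx.
  apply: posdef_unit => v v0; have := PD1 0 v; rewrite v0 orbT.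
  by rewrite !bil0l mulr0 !add0r; apply.
pose X := a *m invmx M *m b.
pose Gb := fun d => if d == k.+1 then X^T else Ga d.
have agree : forall d, (d <= k)%N -> Gb d = Ga d.
  by move=> d dk; rewrite /Gb; case: eqP => // E; move: dk; rewrite E ltnn.
exists Gb; split => // f [i ik fi].
have sym0' : (Gb 0%N)^T = Gb 0%N by rewrite /Gb /= sym0.
rewrite Qf_three; last exact: Gt_sym.
have -> : Gt Gb 0%N 0%N = Ga 0%N by rewrite /Gt /= agree.
have -> : Gt Gb k.+1 k.+1 = Ga 0%N by rewrite /Gt leqnn subnn agree.
have -> : Gt Gb 0%N k.+1 = X by rewrite /Gt /= /Gb subn0 eqxx trmxK.
have -> : \mxrow_(j < k) Gt Gb 0%N j.+1 = a.
  apply: eq_mxrow => j; rewrite /a /F (Gt_agree agree) //.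
  by rewrite subn0 ltn_ord.
have -> : \mxblock_(i < k, j < k) Gt Gb i.+1 j.+1 = M.
  apply: eq_mxblock => i' j; rewrite /M /F (Gt_agree agree) //.
    by rewrite subSS (leq_trans (leq_subr _ _)) // ltnW.
  by rewrite subSS (leq_trans (leq_subr _ _)) // ltnW.
have -> : \mxcol_(i < k) Gt Gb i.+1 k.+1 = b.
  apply: eq_mxcol => i'; rewrite /b /F (Gt_agree agree) //.
    by rewrite subSS (leq_trans (leq_subr _ _)) // ltnW.
  by rewrite subSS leq_subr.
apply: (schur MT Mu PD1 PD2).
case: i ik fi => [|i] ik fi; first by rewrite fi.
case: (ltngtP i k) => [ilt|igt|ik']; last by move: fi; rewrite ik' => ->; rewrite !orbT.
  by rewrite (@mxrow_neq0 _ _ _ (fun j => f j.+1) i ilt fi) orbT.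
by move: ik; rewrite !ltnS leqNgt igt.
Qed.

Lemma ext_all {R : realType} {m : nat} (Ga : nat -> 'M[R]_m) n :
  (Ga 0%N)^T = Ga 0%N -> pdF (Gt Ga) n.+1 ->
  forall k, (n <= k)%N ->
  exists Gb, (forall d, (d <= n)%N -> Gb d = Ga d) /\ pdF (Gt Gb) k.+1.
Proof.
move=> sym0 pd; elim=> [|k IH] nk.
  by exists Ga; move: nk; rewrite leqn0 => /eqP E; subst n.
case: (leqP n k) => [nk'|kn].
  have [Gc [agc pdc]] := IH nk'.
  have sc : (Gc 0%N)^T = Gc 0%N by rewrite agc.
  have [Gb [agb pdb]] := ext_step sc pdc.
  exists Gb; split => // d dn; rewrite agb ?agc //; exact: leq_trans dn nk'.
have -> : k.+1 = n by apply/eqP; rewrite eqn_leq nk kn.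
by exists Ga.
Qed.


Definition nrm {R : realType} {s : nat} (x : 'rV[R]_s) : R := bil x 1%:M x.

Lemma nrmE {R : realType} {s : nat} (x : 'rV[R]_s) :
  nrm x = \sum_a x 0 a ^+ 2.
Proof.
rewrite /nrm /bil mulmx1 mxE; apply: eq_bigr => a _; by rewrite !mxE expr2.
Qed.

Lemma nrm_ge0 {R : realType} {s : nat} (x : 'rV[R]_s) : 0 <= nrm x.
Proof. by rewrite nrmE; apply: sumr_ge0 => a _; rewrite sqr_ge0. Qed.

Lemma coord_le_nrm {R : realType} {s : nat} (x : 'rV[R]_s) a :
  x 0 a ^+ 2 <= nrm x.
Proof.
rewrite nrmE (bigD1 a) //= lerDl; apply: sumr_ge0 => b _; exact: sqr_ge0.
Qed.


Lemma nrm_gt0 {R : realType} {s : nat} (x : 'rV[R]_s) : x != 0 -> 0 < nrm x.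
Proof.
move=> x0; have [a xa] : exists a, x 0 a != 0.
  apply/existsP; apply: contraR x0 => /existsPn H; apply/eqP/matrixP => i j.
  by rewrite ord1 mxE; apply/eqP; have := H j; move/negbNE.
apply: (lt_le_trans _ (coord_le_nrm x a)).
by rewrite lt_def sqr_ge0 andbT sqrf_eq0.
Qed.

Lemma bil_sum {R : realType} p q (u : 'rV[R]_p) A (v : 'rV[R]_q) :
  bil u A v = \sum_b \sum_a u 0 a * A a b * v 0 b.
Proof.
rewrite /bil mxE; apply: eq_bigr => b _; rewrite !mxE big_distrl /=.
done.
Qed.

Definition asum {R : realType} p q (A : 'M[R]_(p,q)) : R := \sum_a \sum_b `|A a b|.

Lemma asum_ge0 {R : realType} p q (A : 'M[R]_(p,q)) : 0 <= asum A.
Proof. by apply: sumr_ge0 => a _; apply: sumr_ge0 => b _. Qed.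

Lemma bil_abs {R : realType} p q (u : 'rV[R]_p) A (v : 'rV[R]_q) :
  `|bil u A v| <= asum A * (nrm u + nrm v).
Proof.
rewrite bil_sum /asum mulr_suml [X in `|X|]exchange_big /=.
apply: (le_trans (ler_norm_sum _ _ _)); apply: ler_sum => a _.
rewrite mulr_suml; apply: (le_trans (ler_norm_sum _ _ _)); apply: ler_sum => b _.
rewrite !normrM.
have h1 := coord_le_nrm u a; have h2 := coord_le_nrm v b.
have e1 : `|u 0 a| ^+ 2 = u 0 a ^+ 2 by rewrite real_normK // num_real.
have e2 : `|v 0 b| ^+ 2 = v 0 b ^+ 2 by rewrite real_normK // num_real.
have g1 : 0 <= `|u 0 a| by []. have g2 : 0 <= `|v 0 b| by [].
have g3 : 0 <= `|A a b| by [].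
have H : `|u 0 a| * `|v 0 b| <= nrm u + nrm v.
  rewrite -e1 -e2 in h1 h2; nra.
rewrite -mulrA mulrC -mulrA; apply: ler_wpM2l => //.
by rewrite mulrC.
Qed.

Lemma eps_posdef {R : realType} {s : nat} (T : 'M[R]_s) :
  T^T = T -> posdef T -> exists2 c, 0 < c & forall x, nrm x <= c * bil x T x.
Proof.
move=> TT pd.
have Tu : T \in unitmx by apply: posdef_unit => v v0; exact: pd.
set Ti := invmx T.
have TiT : Ti^T = Ti by rewrite /Ti trmx_inv TT.
have TTi : T *m Ti = 1%:M by rewrite /Ti mulmxV.
have TiT' : Ti *m T = 1%:M by rewrite /Ti mulVmx.
pose c := 2 * asum Ti + 1.
have c0 : 0 < c by have := asum_ge0 Ti; rewrite /c => ?; lra.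
exists c => // x.
pose t := c^-1.
have t0 : 0 < t by rewrite invr_gt0.
have tc : t * c = 1 by rewrite mulVf // gt_eqF.
pose y := x - t *: (x *m Ti).
have y0 : 0 <= bil y T y.
  have [->|yn] := eqVneq y 0; first by rewrite bil0l.
  by apply: ltW; apply: pd.
have Ey : bil y T y = bil x T x - 2 * t * nrm x + t ^+ 2 * bil x Ti x.
  rewrite /y !bilDl !bilDr !bilNl !bilNr !bilZl !bilZr.
  rewrite !bil_mull !bil_mulr TiT TTi TiT' /nrm mul1mx; ring.
have B : bil x Ti x <= c * nrm x.
  have := bil_abs x Ti x; have := nrm_ge0 x; have := asum_ge0 Ti.
  rewrite /c => h1 h2 /(le_trans (ler_norm _)) h3; nra.
have N0 := nrm_ge0 x.
have B2 : t ^+ 2 * bil x Ti x <= t * nrm x.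
  have -> : t * nrm x = t ^+ 2 * (c * nrm x).
    by rewrite expr2 mulrA -(mulrA t t c) tc mulr1.
  by apply: ler_wpM2l => //; rewrite sqr_ge0.
have : t * nrm x <= bil x T x by lra.
move=> H; have := ler_wpM2l (ltW c0) H.
by rewrite mulrA (mulrC c t) tc mul1r.
Qed.


Lemma nrm_mxrow {R : realType} {m : nat} k (f : nat -> 'rV[R]_m) :
  nrm (\mxrow_(i < k) f i) = \sum_(0 <= i < k) nrm (f i).
Proof.
rewrite /nrm /bil mulmx1 tr_mxrow mul_mxrow_mxcol summxE big_mkord.
by apply: eq_bigr => i _; rewrite mulmx1.
Qed.

Lemma eps_block {R : realType} {m : nat} (F : nat -> nat -> 'M[R]_m) k :
  symF F -> pdF F k ->
  exists2 c, 0 < c & forall f, \sum_(0 <= i < k) nrm (f i) <= c * Qf F k f.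
Proof.
move=> sF pd.
have TT : (\mxblock_(i < k, j < k) F i j)^T = \mxblock_(i < k, j < k) F i j.
  by rewrite tr_mxblock; apply: eq_mxblock => i j; rewrite -sF.
have [c c0 H] := eps_posdef TT (pdF_posdef pd).
exists c => // f; rewrite -nrm_mxrow Qf_mxrow; exact: H.
Qed.

Lemma Gt_scale {R : realType} {m : nat} (Ga : nat -> 'M[R]_m) (w : nat -> R) i j :
  Gt (fun d => w d *: Ga d) i j =
  w (if (j <= i)%N then (i - j)%N else (j - i)%N) *: Gt Ga i j.
Proof. by rewrite /Gt; case: ifP => _ //; rewrite linearZ. Qed.

Lemma eqle {R : realType} (x y : R) : x = y -> x <= y.
Proof. by move=> ->. Qed.

Lemma le_sum_nat {R : realType} (F : nat -> R) k i :
  (forall j, 0 <= F j) -> (i < k)%N -> F i <= \sum_(0 <= j < k) F j.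
Proof.
move=> F0 ik; rewrite big_mkord (bigD1 (Ordinal ik)) //= lerDl.
by apply: sumr_ge0 => j _.
Qed.

Lemma open_pd {R : realType} {m : nat} (Ga : nat -> 'M[R]_m) (w : nat -> R) k c dl :
  0 < c -> (forall f, \sum_(0 <= i < k) nrm (f i) <= c * Qf (Gt Ga) k f) ->
  (forall d, (d < k)%N -> `|w d - 1| <= dl) ->
  2 * dl * (\sum_(0 <= i < k) \sum_(0 <= j < k) asum (Gt Ga i j)) * c < 1 ->
  pdF (Gt (fun d => w d *: Ga d)) k.
Proof.
move=> c0 eps wd small f [i0 ik fi0].
set E := \sum_(0 <= i < k) nrm (f i).
set A := \sum_(0 <= i < k) \sum_(0 <= j < k) asum (Gt Ga i j).
have smallA : 2 * dl * A * c < 1 by exact: small.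
have E0 : 0 < E.
  apply: (lt_le_trans (nrm_gt0 fi0)); apply: le_sum_nat => // j; exact: nrm_ge0.
pose D := \sum_(0 <= i < k) \sum_(0 <= j < k)
   ((w (if (j <= i)%N then (i - j)%N else (j - i)%N) - 1) * bil (f i) (Gt Ga i j) (f j)).
have QD : Qf (Gt (fun d => w d *: Ga d)) k f = Qf (Gt Ga) k f + D.
  rewrite /Qf /D -big_split /=; apply: eq_bigr => i _.
  rewrite -big_split /=; apply: eq_bigr => j _.
  by rewrite Gt_scale bilZm; ring.
have DB' : `|D| <= \sum_(0 <= i < k) \sum_(0 <= j < k) (2 * dl * E) * asum (Gt Ga i j).
  rewrite /D; apply: (le_trans (ler_norm_sum _ _ _)).
  rewrite big_nat_cond [X in _ <= X]big_nat_cond.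
  apply: ler_sum => i /andP[/andP[_ ik'] _].
  apply: (le_trans (ler_norm_sum _ _ _)).
  rewrite big_nat_cond [X in _ <= X]big_nat_cond.
  apply: ler_sum => j /andP[/andP[_ jk'] _].
  rewrite normrM.
  have h1 : `|w (if (j <= i)%N then (i - j)%N else (j - i)%N) - 1| <= dl.
    apply: wd; case: ifP => _; apply: (leq_ltn_trans (leq_subr _ _)) => //.
  have h2 := bil_abs (f i) (Gt Ga i j) (f j).
  have ni : nrm (f i) <= E by apply: le_sum_nat => // j'; exact: nrm_ge0.
  have nj : nrm (f j) <= E by apply: le_sum_nat => // j'; exact: nrm_ge0.
  have a0 := asum_ge0 (Gt Ga i j).
  have g0 : 0 <= `|bil (f i) (Gt Ga i j) (f j)| by [].
  have g1 : 0 <= `|w (if (j <= i)%N then (i - j)%N else (j - i)%N) - 1| by [].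
  have h3 : `|bil (f i) (Gt Ga i j) (f j)| <= asum (Gt Ga i j) * (2 * E).
    apply: (le_trans h2); apply: ler_wpM2l => //; lra.
  have := ler_pM g1 g0 h1 h3.
  move=> H; apply: (le_trans H); apply: eqle; ring.
have DB : `|D| <= 2 * dl * A * E.
  apply: (le_trans DB'); apply: eqle.
  have -> : 2 * dl * A * E = (2 * dl * E) * A by ring.
  rewrite /A [RHS]mulr_sumr; apply: eq_bigr => i _.
  by rewrite [RHS]mulr_sumr.
have := eps f; rewrite -/E => HE.
have D1 : - (2 * dl * A * E) <= D.
  by have := ler_norm (- D); rewrite normrN => H; lra.
have cD : - (2 * dl * A * c) * E <= c * D.
  have := ler_wpM2l (ltW c0) D1 => H; apply: (le_trans _ H); apply: eqle; ring.
have P : 0 < E * (1 - 2 * dl * A * c) by apply: mulr_gt0 => //; lra.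
have : 0 < c * (Qf (Gt Ga) k f + D).
  rewrite mulrDr; move: P; rewrite mulrBr mulr1 => P; lra.
by rewrite QD pmulr_rgt0.
Qed.


Lemma mxblock_lin {R : realType} {m N : nat} (c : R) (S P Q : nat)
  (B : nat -> nat -> nat -> nat -> nat -> 'M[R]_m) :
  \mxblock_(i < N, j < N) (c *: \sum_(0 <= s < S) \sum_(0 <= p < P) \sum_(0 <= q < Q) B s p q i j)
  = c *: \sum_(0 <= s < S) \sum_(0 <= p < P) \sum_(0 <= q < Q)
        \mxblock_(i < N, j < N) B s p q i j.
Proof.
apply/matrixP => a b; rewrite !mxE summxE; congr (_ * _).
rewrite summxE; apply: eq_bigr => s _; rewrite !summxE; apply: eq_bigr => p _.
rewrite !summxE; apply: eq_bigr => q _; by rewrite !mxE.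
Qed.

Definition circ_blk {R : realType} {m : nat} (F : nat -> nat -> 'M[R]_m) (K N i j : nat)
  : 'M[R]_m :=
  (K%:R)^-1 *: \sum_(0 <= s < N) \sum_(0 <= p < K) \sum_(0 <= q < K)
     (if (((s + p) %% N)%N == i) && (((s + q) %% N)%N == j) then F p q else 0).

Definition circ {R : realType} {m : nat} (F : nat -> nat -> 'M[R]_m) (K N : nat)
  : 'M[R]_(\sum_(i < N) m, \sum_(j < N) m) :=
  \mxblock_(i < N, j < N) circ_blk F K N i j.

Lemma bil_summ {R : realType} p q (u : 'rV[R]_p) (v : 'rV[R]_q) (I : Type)
  (r : seq I) (P : pred I) (A : I -> 'M[R]_(p,q)) :
  bil u (\sum_(k <- r | P k) A k) v = \sum_(k <- r | P k) bil u (A k) v.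
Proof. by rewrite /bil mulmx_sumr mulmx_suml summxE. Qed.

Lemma bil0m {R : realType} p q (u : 'rV[R]_p) (v : 'rV[R]_q) :
  bil u (0 : 'M[R]_(p,q)) v = 0.
Proof. by rewrite /bil mulmx0 mul0mx mxE. Qed.

Lemma sum_delta {V : zmodType} N c (h : nat -> V) :
  (c < N)%N -> \sum_(0 <= i < N) (if c == i then h i else 0) = h c.
Proof.
move=> cN; rewrite big_mkord (bigD1 (Ordinal cN)) //= eqxx big1 ?addr0 //.
move=> i iN; case: eqP => // E; exfalso; move: iN; apply/negP; rewrite negbK.
by apply/eqP/val_inj; rewrite /= E.
Qed.

Lemma sum_delta2 {V : zmodType} N a b (T : nat -> nat -> V) :
  (a < N)%N -> (b < N)%N ->
  \sum_(0 <= i < N) \sum_(0 <= j < N) (if (a == i) && (b == j) then T i j else 0)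
  = T a b.
Proof.
move=> aN bN.
rewrite (eq_bigr (fun i => if a == i then T i b else 0)); first exact: sum_delta.
move=> i _; case: (a == i) => /=; first exact: sum_delta.
by rewrite big1.
Qed.

Lemma bil_circ {R : realType} {m : nat} (F : nat -> nat -> 'M[R]_m) K N
  (x : 'rV[R]_(\sum_(i < N) m)) : (0 < N)%N ->
  bil x (circ F K N) x = (K%:R)^-1 * \sum_(0 <= s < N)
     Qf F K (fun p => xb x ((s + p) %% N)).
Proof.
move=> N0; rewrite /circ /circ_blk.
rewrite (@mxblock_lin R m N ((K%:R)^-1) N K K (fun s p q i j =>
   if (((s + p) %% N)%N == i) && (((s + q) %% N)%N == j) then F p q else 0)).
rewrite bilZm; congr (_ * _).
rewrite bil_summ; apply: eq_bigr => s _; rewrite /Qf bil_summ.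
apply: eq_bigr => p _; rewrite bil_summ; apply: eq_bigr => q _.
rewrite (bil_block_xb x x (fun i j => if (((s + p) %% N)%N == i) && (((s + q) %% N)%N == j) then F p q else 0)).
rewrite (eq_bigr (fun i => \sum_(0 <= j < N) if (((s + p) %% N)%N == i) &&
   (((s + q) %% N)%N == j) then bil (xb x i) (F p q) (xb x j) else 0)).
  by rewrite sum_delta2 // ltn_pmod.
move=> i _; apply: eq_bigr => j _; case: ifP => _ //; exact: bil0m.
Qed.

Lemma Qf_ge0 {R : realType} {m : nat} (F : nat -> nat -> 'M[R]_m) k f :
  pdF F k -> 0 <= Qf F k f.
Proof.
move=> pd; case: (pickP (fun i : 'I_k => f i != 0)) => [i Hi | H0].
  by apply: ltW; apply: pd; exists i.
rewrite (@Qf_ext _ _ _ _ f (fun _ => 0)); last first.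
  by move=> i ik; have := H0 (Ordinal ik); move/negbFE/eqP.
rewrite /Qf big1_seq // => i _; rewrite big1_seq // => j _; exact: bil0l.
Qed.

Lemma circ_posdef {R : realType} {m : nat} (F : nat -> nat -> 'M[R]_m) K N :
  (0 < K)%N -> (0 < N)%N -> pdF F K -> posdef (circ F K N).
Proof.
move=> K0 N0 pd x x0.
have := bil_circ F K x N0; rewrite /bil => ->.
apply: mulr_gt0; first by rewrite invr_gt0 ltr0n.
have [i0 i0N xi0] := xb_neq0 x0.
have H1 := @le_sum_nat R (fun s => Qf F K (fun p => xb x ((s + p) %% N))) N i0
   (fun s => Qf_ge0 (fun p => xb x ((s + p) %% N)) pd) i0N.
apply: (lt_le_trans _ H1) => /=.
by apply: pd; exists 0%N => //=; rewrite addn0 modn_small.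
Qed.


Lemma circ_blk_sym {R : realType} {m : nat} (F : nat -> nat -> 'M[R]_m) K N i j :
  symF F -> (circ_blk F K N j i)^T = circ_blk F K N i j.
Proof.
move=> sF; rewrite /circ_blk linearZ /= raddf_sum; congr (_ *: _).
apply: eq_bigr => s _; rewrite raddf_sum exchange_big_nat /=.
apply: eq_bigr => p _; rewrite raddf_sum; apply: eq_bigr => q _.
rewrite andbC; case: ifP => _; [by rewrite [RHS]sF | exact: raddf0].
Qed.

Lemma circ_tr {R : realType} {m : nat} (F : nat -> nat -> 'M[R]_m) K N :
  symF F -> (circ F K N)^T = circ F K N.
Proof.
move=> sF; rewrite /circ tr_mxblock; apply: eq_mxblock => i j.
exact: circ_blk_sym.
Qed.

Lemma mod_shift (N s p i : nat) : (s < N)%N -> (i < N)%N -> (p <= N)%N ->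
  (((s + p) %% N)%N == i) = (s == (i + N - p) %% N)%N.
Proof.
move=> sN iN pN.
rewrite -{1}(modn_small iN) -(modnDr i N).
have -> : (i + N = (i + N - p) + p)%N by rewrite subnK // (leq_trans pN) // leq_addl.
by rewrite eqn_modDr modn_small // addnK.
Qed.

Lemma mod_norm (N i j p q : nat) : (j < N)%N -> (p <= N)%N ->
  ((((i + N - p) %% N) + q) %% N == j)%N = (i + N + q == j + p %[mod N])%N.
Proof.
move=> jN pN.
rewrite -{1}(modn_small jN) modnDml -(eqn_modDr p).
by rewrite addnAC subnK // (leq_trans pN) // leq_addl.
Qed.

Lemma circ_blk_collapse {R : realType} {m : nat} (F : nat -> nat -> 'M[R]_m) K N i j :
  (i < N)%N -> (j < N)%N -> (K <= N)%N ->
  circ_blk F K N i j = (K%:R)^-1 *: \sum_(0 <= p < K) \sum_(0 <= q < K)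
     (if (i + N + q == j + p %[mod N])%N then F p q else 0).
Proof.
move=> iN jN KN; rewrite /circ_blk; congr (_ *: _).
rewrite exchange_big_nat /=; apply: eq_big_nat => p /andP[_ pK].
rewrite exchange_big_nat /=; apply: eq_bigr => q _.
have pN : (p <= N)%N by apply: ltnW; apply: leq_trans KN.
rewrite (eq_big_nat _ _ (F2 := fun s => if ((i + N - p) %% N)%N == s then
     (if (((s + q) %% N)%N == j) then F p q else 0) else 0)); last first.
  move=> s /andP[_ sN]; rewrite mod_shift // eq_sym.
  by case: ((i + N - p) %% N == s)%N.
by rewrite sum_delta ?ltn_pmod ?(leq_ltn_trans _ iN) // mod_norm.
Qed.

Lemma circ_circulant {R : realType} {m : nat} (F : nat -> nat -> 'M[R]_m) K N :
  (K <= N)%N -> block_circulant (circ F K N).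
Proof.
move=> KN i j i' j' H; rewrite /circ !mxblockK.
rewrite !circ_blk_collapse //; congr (_ *: _).
apply: eq_bigr => p _; apply: eq_bigr => q _.
have key : forall a b : 'I_N, (a + N + q == b + p %[mod N])%N =
     (((a + N - b) %% N) + q == p %[mod N])%N.
  move=> a b.
  have E : (a + N + q = (a + N - b) + q + b)%N.
    by rewrite [RHS]addnAC subnK // (leq_trans (ltnW (ltn_ord b))) // leq_addl.
  by rewrite E (addnC b p) eqn_modDr modnDml.
by rewrite !key H.
Qed.

Lemma sum_delta' {V : zmodType} N c (h : nat -> V) :
  \sum_(0 <= i < N) (if c == i then h i else 0) = if (c < N)%N then h c else 0.
Proof.
case: ifP => cN; first exact: sum_delta.
rewrite big_nat_cond big1 // => i /andP[/andP[_ iN] _].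
by case: eqP => // E; move: cN; rewrite E iN.
Qed.

Lemma count_sum {R : realType} {m : nat} (A : 'M[R]_m) K d :
  \sum_(0 <= q < K) (if (d + q < K)%N then A else 0) = (K - d)%:R *: A.
Proof.
case: (leqP d K) => dK; last first.
  have -> : (K - d = 0)%N by apply/eqP; rewrite subn_eq0 ltnW.
  rewrite scale0r big_nat_cond big1 // => q /andP[/andP[_ qK] _].
  by rewrite ifF //; apply/negbTE; rewrite -leqNgt (leq_trans (ltnW dK)) // leq_addr.
rewrite (big_cat_nat _ (n := (K - d)%N)) //=; last exact: leq_subr.
rewrite [X in _ + X]big_nat_cond [X in _ + X]big1; last first.
  move=> q /andP[/andP[qK _] _]; rewrite ifF //; apply/negbTE.
  by rewrite -leqNgt -leq_subLR.
rewrite addr0 big_nat_cond (eq_bigr (fun _ => A)); last first.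
  move=> q /andP[/andP[_ qK] _]; rewrite ifT //.
  by rewrite -ltn_subRL.
by rewrite -big_nat_cond sumr_const_nat subn0 scaler_nat.
Qed.

Lemma corner_blk {R : realType} {m : nat} (Ga : nat -> 'M[R]_m) K N i j :
  (0 < K)%N -> (i + K <= N)%N -> (j + K <= N)%N -> (K <= N)%N ->
  circ_blk (Gt Ga) K N i j = (K%:R)^-1 *:
     ((K - (if (j <= i)%N then (i - j)%N else (j - i)%N))%N%:R *: Gt Ga i j).
Proof.
move=> K0 iK jK KN.
have iN : (i < N)%N by apply: leq_trans iK; rewrite -addn1 leq_add2l.
have jN : (j < N)%N by apply: leq_trans jK; rewrite -addn1 leq_add2l.
rewrite circ_blk_collapse //; congr (_ *: _).
have C : forall p q, (p < K)%N -> (q < K)%N ->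
    (i + N + q == j + p %[mod N])%N = (i + q == j + p)%N.
  move=> p q pK qK.
  rewrite addnAC modnDr modn_small ?modn_small //.
    by apply: leq_trans jK; rewrite ltn_add2l.
  by apply: leq_trans iK; rewrite ltn_add2l.
rewrite (eq_big_nat _ _ (F2 := fun p => \sum_(0 <= q < K)
    (if (i + q == j + p)%N then Gt Ga p q else 0))); last first.
  move=> p /andP[_ pK]; apply: eq_big_nat => q /andP[_ qK]; by rewrite C.
case: (leqP j i) => ji.
  set d := (i - j)%N.
  have Ei : i = (j + d)%N by rewrite /d subnKC.
  rewrite exchange_big_nat /=.
  rewrite (eq_bigr (fun q => if (d + q < K)%N then Gt Ga i j else 0)).
    by rewrite count_sum.
  move=> q _.
  rewrite (eq_bigr (fun p => if (d + q == p)%N then Gt Ga p q else 0)); last first.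
    by move=> p _; rewrite {1}Ei -addnA eqn_add2l.
  rewrite sum_delta'; case: ifP => // _.
  by rewrite /Gt leq_addl addnK ji.
set e := (j - i)%N.
have Ej : j = (i + e)%N by rewrite /e subnKC // ltnW.
rewrite (eq_bigr (fun p => if (e + p < K)%N then Gt Ga i j else 0)).
  by rewrite count_sum.
move=> p _.
rewrite (eq_bigr (fun q => if (e + p == q)%N then Gt Ga p q else 0)); last first.
  by move=> q _; rewrite {1}Ej -addnA eqn_add2l eq_sym.
rewrite sum_delta'; case: ifP => // _.
have e0 : (0 < e)%N by rewrite /e subn_gt0.
rewrite /Gt ifF; last by apply/negbTE; rewrite -ltnNge addnC -addn1 leq_add2l.
by rewrite ifF ?addnK //; apply/negbTE; rewrite -ltnNge.
Qed.


Lemma w_bound {R : realType} (n M d : nat) : (d <= n)%N ->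
  `|((n + M.+1)%N%:R / ((n + M.+1) - d)%N%:R - 1 : R)| <= n%:R / (M.+1)%:R.
Proof.
move=> dn.
set K := (n + M.+1)%N.
have KdM : (M.+1 <= K - d)%N.
  by rewrite /K leq_subRL ?addnA ?leq_add2r // (leq_trans dn) // leq_addr.
have a0 : (0 : R) < (K - d)%N%:R by rewrite ltr0n (leq_trans _ KdM).
have EK : (K%:R : R) = (K - d)%N%:R + d%:R.
  by rewrite -natrD subnK // (leq_trans dn) // /K leq_addr.
have -> : (K%:R / (K - d)%N%:R - 1 : R) = d%:R / (K - d)%N%:R.
  by rewrite EK mulrDl divff ?gt_eqF // addrC addKr.
rewrite ger0_norm ?divr_ge0 // ler_pdivrMr //.
have M0 : (0 : R) < (M.+1)%:R by rewrite ltr0n.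
have H1 : (M.+1)%:R <= (K - d)%N%:R :> R by rewrite ler_nat.
have H2 : d%:R <= n%:R :> R by rewrite ler_nat.
have H3 : 0 <= n%:R / (M.+1)%:R :> R by rewrite divr_ge0.
apply: (le_trans H2); apply: (le_trans _ (ler_wpM2l H3 H1)).
by rewrite mulfVK ?gt_eqF.
Qed.

Lemma scal_one {R : realType} (K d : nat) : (d < K)%N ->
  (K%:R)^-1 * ((K - d)%N%:R * (K%:R / (K - d)%N%:R)) = 1 :> R.
Proof.
move=> dK.
have a0 : (K - d)%N%:R != 0 :> R by rewrite pnatr_eq0 subn_eq0 -ltnNge.
have k0 : K%:R != 0 :> R by rewrite pnatr_eq0 -lt0n (leq_ltn_trans _ dK).
by field; rewrite a0 k0.
Qed.

Unset Implicit Arguments.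

Theorem theorem5 (R : realType) (m n : nat) (Sigma : 'I_n.+1 -> 'M[R]_m) :
  (0 < m)%N -> (0 < n)%N ->
  (toeplitzT Sigma)^T = toeplitzT Sigma ->
  posdef (toeplitzT Sigma) ->
  exists Nbar : nat, forall N : nat, (Nbar <= N)%N ->
    (n < N)%N /\
    exists S : 'M[R]_(\sum_(i < N) m, \sum_(j < N) m),
      block_circulant S /\ S^T = S /\ posdef S /\
      (forall i j : 'I_N, (i <= n)%N -> (j <= n)%N ->
         submxblock S i j = toep_block Sigma i j).
Proof.
move=> hm hn Tsym Tpd.
pose Sg := fun d : nat => Sigma (inord d).
have TE : toeplitzT Sigma = \mxblock_(i < n.+1, j < n.+1) Gt Sg i j by [].
have pd0 : pdF (Gt Sg) n.+1 by apply: posdef_pdF; rewrite -TE.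
have sym0 : (Sg 0%N)^T = Sg 0%N.
  have := congr1 (fun T => submxblock T ord0 ord0) Tsym.
  by rewrite TE tr_mxblock !mxblockK /Gt /=.
have sF0 := Gt_sym sym0.
have [c c0 epsc] := eps_block sF0 pd0.
set A := \sum_(0 <= i < n.+1) \sum_(0 <= j < n.+1) asum (Gt Sg i j).
have A0 : 0 <= A by apply: sumr_ge0 => i _; apply: sumr_ge0 => j _; exact: asum_ge0.
pose M := Num.Def.archi_bound (2 * n%:R * A * c).
have HM : 2 * n%:R * A * c < M%:R.
  by apply: archi_boundP; rewrite !mulr_ge0 // ltW.
pose K := (n + M.+1)%N.
pose w := fun d : nat => (K%:R / (K - d)%N%:R : R).
pose dl := (n%:R / (M.+1)%:R : R).
have wd : forall d, (d < n.+1)%N -> `|w d - 1| <= dl.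
  by move=> d dn; apply: w_bound.
have small : 2 * dl * A * c < 1.
  have M0 : (0 : R) < (M.+1)%:R by rewrite ltr0n.
  have -> : 2 * dl * A * c = (2 * n%:R * A * c) / (M.+1)%:R by rewrite /dl; ring.
  rewrite ltr_pdivrMr // mul1r -addn1 natrD; move: HM; lra.
pose be := fun d => w d *: Sg d.
have pdb : pdF (Gt be) n.+1 by apply: (open_pd c0 epsc wd small).
have symb : (be 0%N)^T = be 0%N by rewrite /be linearZ /= sym0.
have [Ga [agree pdG]] := ext_all symb pdb (leq_addr (M.+1 - 1) n).
have KE : ((n + (M.+1 - 1)).+1 = K)%N by rewrite /K subn1 addnS.
rewrite KE in pdG.
have symG : (Ga 0%N)^T = Ga 0%N by rewrite agree.
have sFG := Gt_sym symG.
have K0 : (0 < K)%N by rewrite /K addnS.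
exists (K + n.+1)%N => N HN.
have KN : (K <= N)%N by apply: leq_trans HN; rewrite leq_addr.
split; first by apply: leq_trans HN; rewrite addnC addSn ltnS leq_addr.
exists (circ (Gt Ga) K N); split; first exact: circ_circulant.
split; first exact: circ_tr.
split; first by apply: circ_posdef => //; apply: leq_trans KN.
move=> i j ilen jlen.
rewrite /circ mxblockK corner_blk //; last first.
- by apply: (leq_trans _ HN); rewrite addnC leq_add2l leqW.
- by apply: (leq_trans _ HN); rewrite addnC leq_add2l leqW.
have dn : ((if (j <= i)%N then (i - j) else (j - i)) <= n)%N.
  by case: ifP => _; apply: leq_trans (leq_subr _ _) _.
rewrite (Gt_agree agree); last first.
- exact: leq_trans (leq_subr _ _) jlen.
- exact: leq_trans (leq_subr _ _) ilen.
rewrite Gt_scale scalerA scalerA -/(w _).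
rewrite scal_one ?scale1r //.
by apply: leq_ltn_trans dn _; rewrite /K addnS ltnS leq_addr.
Qed.
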